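(* Let $\lambda$ be a partition and $L\subset\mathbb R^n$ a full-rank lattice. If the set of flags of subspaces $\{(\mathrm{span}\,\Lambda_i)_i:\Lambda\in\mathscr S_\lambda(L)\}$ determined by the minimal flags of $L$ is a vexillar $2$-design in $\mathscr D_d$, then $L$ is strongly eutactic with respect to $\lambda$; more precisely $\sum_{\Lambda\in\mathscr S_\lambda(L)}\Pi_\Lambda=\frac{|\lambda|\,s_\lambda}{n}\,\mathrm{Id}_{\mathbb R^n}$.
   Context: Let $\lambda$ be a partition whose conjugate partition $\breve\lambda=(\breve\lambda_1\ge\dots\ge\breve\lambda_{\breve s})$ (column lengths) has all parts $<n$; $|\lambda|=\sum_i\breve\lambda_i$. Let $d_1>\dots>d_\ell$ be the distinct values of the $\breve\lambda_i$, $d=(d_1,\dots,d_\ell)$. For a lattice $\Lambda$, $\det\Lambda$ is the determinant of the Gram matrix of a basis. For a full-rank lattice $L\subset\mathbb R^n$, $\gamma(L)=\inf_\Lambda\frac{\det(\Lambda_1)\cdots\det(\Lambda_{\breve s})}{\det(L)^{|\lambda|/n}}$, the infimum over chains of nested sublattices $\Lambda=(\Lambda_1,\dots,\Lambda_{\breve s})$ of $L$ with $\mathrm{rk}\,\Lambda_i=\breve\lambda_i$ (nested meaning $\Lambda_j\subseteq\Lambda_i$ when $\breve\lambda_j\le\breve\lambda_i$). The chains achieving the infimum are the minimal flags; their set $\mathscr S_\lambda(L)$ is finite, of cardinality $s_\lambda$. Each such chain determines a flag of subspaces of shape $d$ (the distinct spans of the $\Lambda_i$). $\Pi_\Lambda=\sum_{i=1}^{\breve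 s}\mathrm{pr}_{\Lambda_i}$, where $\mathrm{pr}_{\Lambda_i}$ is the orthogonal projection onto $\mathrm{span}\,\Lambda_i$. $L$ is eutactic w.r.t. $\lambda$ if $\mathrm{Id}$ is a linear combination with positive coefficients of the $\Pi_\Lambda$, $\Lambda\in\mathscr S_\lambda(L)$, and strongly eutactic if this holds with all coefficients equal. Flag variety and designs: $\mathscr D_d$ is the variety of flags $\{0\}\subsetneq V_\ell\subsetneq\dots\subsetneq V_1\subsetneq\mathbb R^n$, $\dim V_i=d_i$, with $\mathbf O(n)$-invariant probability measure; with $m=d_1$, a flag is represented by $X_\Delta\in M_{n\times m}(\mathbb R)$ with orthonormal columns, the first $d_i$ spanning $V_i$, unique up to right multiplication by the block diagonal group $\mathbf O(d_\ell)\times\mathbf O(d_{\ell-1}-d_\ell)\times\dots\times\mathbf O(d_1-d_2)$; polynomial functions of degree $\le t$ on $\mathscr D_d$ are $\Delta\mapsto P(X_\Delta)$ for $P$ a polynomial of degree $\le t$ in the matrix entries invariant under that group. A vexillar $t$-design is a finite set $\mathcal D\subset\mathscr D_d$ with $\int_{\mathscr D_d}f=\frac1{|\mathcal D|}\sum_{\Delta\in\mathcal D}f(\Delta)$ for all such $f$. *)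

(* Defs.v *)
From HB Require Import structures.
From mathcomp Require Import all_boot all_order all_algebra.
Set Implicit Arguments. Unset Strict Implicit. Unset Printing Implicit Defensive.
Import Order.TTheory GRing.Theory Num.Theory.
Local Open Scope ring_scope.

Definition is_partition (lam : seq nat) : bool :=
  sorted geq lam && all (fun p => 0 < p)%N lam.

(* conjugate partition: column lengths; column i has #{parts > i} cells *)
Definition conjp (lam : seq nat) : seq nat :=
  [seq count (fun p => i < p)%N lam | i <- iota 0 (head 0%N lam)].

Definition psize (lam : seq nat) : nat := sumn lam.

Section Lat.
Variable R : realFieldType.
Variable n : nat.

Definition in_Zspan k (M : 'M[R]_(k, n)) (v : 'rV[R]_n) : Prop :=
  exists c : 'I_k -> int, v = \sum_(j < k) (c j)%:~R *: row j M.

(* the full-rank lattice L with basis the rows of B (B invertible) *)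
Definition in_lattice (B : 'M[R]_n) (v : 'rV[R]_n) : Prop := in_Zspan B v.

Definition zsub k k' (M : 'M[R]_(k, n)) (M' : 'M[R]_(k', n)) : Prop :=
  forall j : 'I_k, in_Zspan M' (row j M).

Definition sublattice (B : 'M[R]_n) k (M : 'M[R]_(k, n)) : Prop :=
  row_free M /\ forall j : 'I_k, in_lattice B (row j M).

(* det of a lattice: Gram determinant of a basis *)
Definition latdet k (M : 'M[R]_(k, n)) : R := \det (M *m M^T).

(* orthogonal projection (on column vectors) onto span of rows of M *)
Definition proj k (M : 'M[R]_(k, n)) : 'M[R]_n := M^T *m invmx (M *m M^T) *m M.

Definition chain (lc : seq nat) := forall i : 'I_(size lc), 'M[R]_(nth 0%N lc i, n).

Definition is_chain (B : 'M[R]_n) (lc : seq nat) (C : chain lc) : Prop :=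
  (forall i, sublattice B (C i)) /\
  (forall i j : 'I_(size lc), (nth 0%N lc j <= nth 0%N lc i)%N -> zsub (C j) (C i)).

Definition chain_val (lc : seq nat) (C : chain lc) : R := \prod_i latdet (C i).

(* minimal flags: chains achieving the infimum of gamma; the (positive, constant)
   denominator det(L)^{|lambda|/n} does not affect which chains are minimal *)
Definition minimal_chain (B : 'M[R]_n) lc (C : chain lc) : Prop :=
  is_chain B C /\ forall C' : chain lc, is_chain B C' -> chain_val C <= chain_val C'.

Definition chain_eq lc (C C' : chain lc) : Prop :=
  forall i, zsub (C i) (C' i) /\ zsub (C' i) (C i).

Definition enum_minimal (B : 'M[R]_n) lc (S : seq (chain lc)) : Prop :=
  (forall k : nat, (k < size S)%N -> forall C0, minimal_chain B (nth C0 S k)) /\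
  (forall C, minimal_chain B C -> exists2 k, (k < size S)%N & forall C0, chain_eq C (nth C0 S k)) /\
  (forall k l : nat, (k < size S)%N -> (l < size S)%N -> forall C0,
       chain_eq (nth C0 S k) (nth C0 S l) -> k = l).

Definition PiL lc (C : chain lc) : 'M[R]_n := \sum_i proj (C i).

(* flags are represented by n x m matrices X with orthonormal columns *)
Definition orthonormal_cols m (X : 'M[R]_(n, m)) : bool := X^T *m X == 1%:M.

(* matrix whose row space is the span of the first k columns of X *)
Definition flag_sp m (k : nat) (X : 'M[R]_(n, m)) : 'M[R]_(m, n) :=
  \matrix_(j < m, r < n) (if (j < k)%N then X r j else 0).

(* X and Y represent the same flag of shape d (d = distinct values of lc) *)
Definition flag_eq (lc : seq nat) m (X Y : 'M[R]_(n, m)) : bool :=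
  all (fun k => (flag_sp k X == flag_sp k Y)%MS) lc.

Definition flag_of (lc : seq nat) m (X : 'M[R]_(n, m)) (C : chain lc) : bool :=
  [forall i : 'I_(size lc), (flag_sp (nth 0%N lc i) X == C i)%MS].

Definition enum_flags lc m (S : seq (chain lc)) (D : seq 'M[R]_(n, m)) : Prop :=
  (forall X, X \in D -> orthonormal_cols X) /\
  (forall k l : nat, (k < size D)%N -> (l < size D)%N ->
       flag_eq lc (nth 0 D k) (nth 0 D l) -> k = l) /\
  (forall X, X \in D -> exists2 k, (k < size S)%N & forall C0, flag_of X (nth C0 S k)) /\
  (forall k : nat, (k < size S)%N -> forall C0, exists2 X, X \in D & flag_of X (nth C0 S k)).

Definition poly2 m (c : R) (a : 'cV[R]_(n * m)) (Q : 'M[R]_(n * m)) (X : 'M[R]_(n, m)) : R :=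
  c + (mxvec X *m a) 0 0 + (mxvec X *m Q *m (mxvec X)^T) 0 0.

Definition is_poly2 m (F : 'M[R]_(n, m) -> R) : Prop :=
  exists c a Q, forall X, F X = @poly2 m c a Q X.

(* the block diagonal group O(d_l) x O(d_{l-1}-d_l) x ... x O(d_1-d_2) in O(m) *)
Definition in_block_group (lc : seq nat) m (h : 'M[R]_m) : Prop :=
  h^T *m h = 1%:M /\
  forall j k : 'I_m, h j k != 0 -> all (fun d => (j < d)%N == (k < d)%N) lc.

Definition flag_poly2 (lc : seq nat) m (F : 'M[R]_(n, m) -> R) : Prop :=
  is_poly2 F /\ forall h X, in_block_group lc h -> F (X *m h) = F X.

(* I is the integral against the O(n)-invariant probability measure on the flag
   variety, restricted to polynomial functions of degree <= 2: a normalized, positive,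
   O(n)-invariant linear functional on the functions Delta |-> F(X_Delta). *)
Definition flag_integral2 (lc : seq nat) m (I : ('M[R]_(n, m) -> R) -> R) : Prop :=
  [/\ (forall F G a, flag_poly2 lc F -> flag_poly2 lc G ->
         I (fun X => a * F X + G X) = a * I F + I G),
      I (fun _ => 1) = 1,
      (forall F G, flag_poly2 lc F -> flag_poly2 lc G ->
         (forall X, orthonormal_cols X -> F X = G X) -> I F = I G),
      (forall F, flag_poly2 lc F -> (forall X, orthonormal_cols X -> 0 <= F X) -> 0 <= I F) &
      (forall F (g : 'M[R]_n), flag_poly2 lc F -> g^T *m g = 1%:M ->
         I (fun X => F (g *m X)) = I F)].

Definition vexillar_2design (lc : seq nat) m (D : seq 'M[R]_(n, m)) : Prop :=
  exists I, flag_integral2 lc I /\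
    forall F, flag_poly2 lc F -> I F = (\sum_(X <- D) F X) / (size D)%:R.

End Lat.

(* Main.v *)
Require Import Defs.
From HB Require Import structures.
From mathcomp Require Import all_boot all_order all_algebra.
From mathcomp Require Import ring lra zify.
Import Order.TTheory GRing.Theory Num.Theory.
Local Open Scope ring_scope.
Set Implicit Arguments. Unset Strict Implicit. Unset Printing Implicit Defensive.

Lemma sqnorm_ge0 (R : realFieldType) n (v : 'rV[R]_n) : 0 <= (v *m v^T) 0 0.
Proof. rewrite mxE; apply: sumr_ge0 => j _; rewrite mxE; exact: mulr_ge0_le0 || by rewrite -expr2 sqr_ge0. Qed.

Lemma sqnorm_gt0 (R : realFieldType) n (v : 'rV[R]_n) : v != 0 -> 0 < (v *m v^T) 0 0.
Proof.
move=> nz; rewrite lt_def sqnorm_ge0 andbT; apply: contra nz => /eqP H.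
apply/eqP/rowP => j; rewrite mxE.
move: H; rewrite mxE => H.
have nn : forall i : 'I_n, true -> 0 <= v 0 i * v^T i 0.
  by move=> i _; rewrite mxE -expr2 sqr_ge0.
have := psumr_eq0P nn H (i := j) isT.
by rewrite mxE => /eqP; rewrite mulf_eq0 orbb => /eqP ->.
Qed.

Lemma pd_det (R : realFieldType) k (M : 'M[R]_k) : M^T = M ->
  (forall x : 'rV[R]_k, x != 0 -> 0 < (x *m M *m x^T) 0 0) -> 0 < \det M.
Proof.
elim: k M => [|k IH]; first by move=> M; rewrite det_mx00.
rewrite -[k.+1]/(1 + k)%N => M sym pos.
pose A := ulsubmx M; pose B := ursubmx M; pose C := dlsubmx M; pose D := drsubmx M.
have eM : M = block_mx A B C D by rewrite submxK.
have eB : B = C^T.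
  have := f_equal (@ursubmx _ 1 k 1 k) sym.
  by rewrite eM tr_block_mx block_mxKur block_mxKur => <-.
have eD : D^T = D.
  have := f_equal (@drsubmx _ 1 k 1 k) sym.
  by rewrite eM tr_block_mx !block_mxKdr.
set a := A 0 0.
have eA : A = a%:M by apply: mx11_scalar.
have Q : forall (u : 'rV_1) (y : 'rV_k), row_mx u y *m M *m (row_mx u y)^T =
   u *m A *m u^T + y *m C *m u^T + u *m B *m y^T + y *m D *m y^T.
  move=> u y; rewrite eM mul_row_block tr_row_mx mul_row_col !mulmxDl. by rewrite addrA.
have apos : 0 < a.
  have := pos (row_mx (1%:M : 'M_1) 0) _.
  rewrite Q !mul0mx trmx0 !mulmx0 !addr0 eA mul1mx mul_scalar_mx tr_scalar_mx scalemx1 mxE eqxx mulr1n.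
  apply; apply/eqP => /(f_equal (@lsubmx _ 1 1 k)); rewrite row_mxKl linear0.
  by move/matrixP/(_ 0 0); rewrite !mxE /= => /eqP; rewrite oner_eq0.
have anz : a != 0 by rewrite gt_eqF.
pose S := D - a^-1 *: (C *m B).
have eMS : block_mx 1 0 (- a^-1 *: C) 1 *m M = block_mx A B 0 S.
  rewrite eM mulmx_block !mul1mx !mul0mx !addr0 eA.
  rewrite -!scalemxAl mul_mx_scalar scalerA mulNr mulVf // scaleN1r addNr.
  by rewrite /S scaleNr addrC.
have : \det M = a * \det S.
  have := f_equal determinant eMS; rewrite det_mulmx det_lblock !det1 !mul1r.
  by rewrite det_ublock eA det_mx11 mxE eqxx mulr1n.
move=> ->; apply: mulr_gt0 => //; apply: IH.
  rewrite /S linearB /= eD linearZ /= trmx_mul eB trmxK //.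
move=> y ynz; pose u := - a^-1 *: (y *m C).
have := pos (row_mx u y) _.
have -> : row_mx u y *m M *m (row_mx u y)^T = y *m S *m y^T.
  rewrite Q /S /u eA eB; set w := y *m C.
  have ew : w^T = C^T *m y^T by rewrite trmx_mul.
  rewrite mul_mx_scalar !linearZ /= -!scalemxAl -(mulmxA w) -ew.
  rewrite mulmxDr mulmxDl -scalemxAr -scalemxAl mulmxN mulNmx !mulmxA -/w.
  rewrite -(mulmxA w) -ew !scalerA.
  apply/matrixP => i j; rewrite !mxE.
  field; exact: anz.
apply; apply: contra ynz => /eqP/(f_equal (@rsubmx _ 1 1 k)).
by rewrite row_mxKr linear0 => ->.
Qed.
Lemma gram_pos (R : realFieldType) k n (A : 'M[R]_(k, n)) :
  row_free A -> 0 < \det (A *m A^T).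
Proof.
move=> fr; apply: pd_det; first by rewrite trmx_mul trmxK.
move=> x nz; rewrite !mulmxA -(mulmxA (x *m A)) -trmx_mul.
by apply: sqnorm_gt0; rewrite mulmx_free_eq0.
Qed.

Lemma gram_unit (R : realFieldType) k n (A : 'M[R]_(k, n)) :
  row_free A -> A *m A^T \in unitmx.
Proof. by move=> fr; rewrite unitmxE unitfE gt_eqF // gram_pos. Qed.

Lemma flag_sp_FFt (R : realFieldType) n m kk (X : 'M[R]_(n, m)) :
  orthonormal_cols X ->
  flag_sp kk X *m (flag_sp kk X)^T = \matrix_(j, l) ((j == l) && (j < kk)%N)%:R.
Proof.
move=> /eqP oX; apply/matrixP => j l; rewrite !mxE.
have := congr1 (fun M : 'M[R]_m => M j l) oX; rewrite !mxE => H.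
case: (ltnP j kk) => hj; case: (ltnP l kk) => hl; rewrite ?andbT ?andbF /=.
- by rewrite -H; apply: eq_bigr => r _; rewrite !mxE hj hl.
- rewrite big1; last by move=> r _; rewrite !mxE hj ltnNge hl /= mulr0.
  by case: eqP => // ejl; move: hj hl; rewrite ejl => /leq_trans HH /HH; rewrite ltnn.
- by rewrite big1 // => r _; rewrite !mxE ltnNge hj /= mul0r.
- by rewrite big1 // => r _; rewrite !mxE ltnNge hj /= mul0r.
Qed.

Lemma flag_sp_FFtF (R : realFieldType) n m kk (X : 'M[R]_(n, m)) :
  orthonormal_cols X ->
  flag_sp kk X *m (flag_sp kk X)^T *m flag_sp kk X = flag_sp kk X.
Proof.
move=> oX; rewrite flag_sp_FFt //; apply/matrixP => j r; rewrite !mxE.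
rewrite (bigD1 j) //= big1 ?addr0; last first.
  by move=> l /negPf njl; rewrite !mxE eq_sym njl mul0r.
rewrite !mxE eqxx /=; case: (ltnP j kk) => hj; first by rewrite mul1r.
by rewrite mul0r.
Qed.

Lemma proj_flag (R : realFieldType) n m kk k (X : 'M[R]_(n, m)) (A : 'M[R]_(k, n)) :
  orthonormal_cols X -> row_free A -> (flag_sp kk X == A)%MS ->
  proj A = (flag_sp kk X)^T *m flag_sp kk X.
Proof.
move=> oX fr /andP[/submxP[W' eF] /submxP[W eA]].
set F := flag_sp kk X in eF eA *.
have U := gram_unit fr.
have PFt : proj A *m F^T = F^T.
  rewrite /proj eF trmx_mul -!mulmxA (mulmxA A) (mulmxA (invmx _)) mulVmx //.
  by rewrite mul1mx.
have AF : A *m F^T *m F = A.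
  by rewrite [in LHS]eA -(mulmxA W) -(mulmxA W) flag_sp_FFtF // -eA.
have -> : proj A = proj A *m F^T *m F.
  by rewrite /proj -!mulmxA (mulmxA A) AF.
by rewrite PFt.
Qed.
From mathcomp Require Import perm.

Lemma orth_scalar (R : realFieldType) n (N : 'M[R]_n) : (0 < n)%N ->
  (forall g : 'M[R]_n, g^T *m g = 1%:M -> g *m N *m g^T = N) ->
  N = (\tr N / n%:R) *: 1%:M.
Proof.
move=> npos H.
have offd : forall a b : 'I_n, a != b -> N a b = 0.
  move=> a b nab.
  pose d : 'rV[R]_n := \row_j (if j == a then -1 else 1).
  have od : (diag_mx d)^T *m diag_mx d = 1%:M.
    rewrite tr_diag_mx mulmx_diag; apply/matrixP => i j; rewrite !mxE.
    by case: (i == a); case: (i == j); rewrite ?mulrNN ?mul1r ?mulr1n ?mulr0n.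
  have := congr1 (fun M : 'M[R]_n => M a b) (H _ od).
  rewrite tr_diag_mx mul_diag_mx mul_mx_diag !mxE eqxx eq_sym (negPf nab) mulr1 mulN1r.
  by move=> h; lra.
have diagc : forall a b : 'I_n, N a a = N b b.
  move=> a b; pose s := tperm a b.
  have op : (perm_mx s)^T *m perm_mx s = 1%:M :> 'M[R]_n.
    by rewrite tr_perm_mx -perm_mxM mulVg perm_mx1.
  have := congr1 (fun M : 'M[R]_n => M a a) (H _ op).
  rewrite -row_permE tr_perm_mx -col_permE.
  by rewrite !mxE tpermL => <-.
set i0 := Ordinal npos.
have eN : N = N i0 i0 *: 1%:M.
  apply/matrixP => i j; rewrite !mxE; case: eqP => [<-|/eqP nij].
    by rewrite mulr1 (diagc i i0).
  by rewrite mulr0 offd.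
have -> : \tr N = n%:R * N i0 i0.
  by rewrite /mxtrace (eq_bigr (fun _ => N i0 i0)) ?sumr_const ?card_ord ?mulr_natl // => i _; rewrite diagc.
rewrite mulrC mulrA mulVf ?mul1r //; by rewrite pnatr_eq0 -lt0n.
Qed.
Definition Qk (R : realFieldType) n m kk (X : 'M[R]_(n, m)) : 'M[R]_n :=
  (flag_sp kk X)^T *m flag_sp kk X.

Lemma Qk_entry (R : realFieldType) n m kk (X : 'M[R]_(n, m)) a b :
  Qk kk X a b = \sum_(j < m) (j < kk)%N%:R * (X a j * X b j).
Proof.
rewrite /Qk mxE; apply: eq_bigr => j _; rewrite !mxE.
by case: (j < kk)%N; rewrite ?mul1r ?mul0r.
Qed.

Lemma mul_delta_quad (R : realFieldType) p (x y : 'rV[R]_p) u v :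
  (x *m delta_mx u v *m y^T) 0 0 = x 0 u * y 0 v.
Proof.
rewrite -(mul_delta_mx (0 : 'I_1)) mulmxA -colE (mx11_scalar (col u x)).
rewrite mul_scalar_mx -scalemxAl -rowE !mxE.
by [].
Qed.

Lemma poly2_ext (R : realFieldType) n m (F G : 'M[R]_(n, m) -> R) :
  (forall X, F X = G X) -> is_poly2 F -> is_poly2 G.
Proof. by move=> e [c [a [Q H]]]; exists c, a, Q => X; rewrite -e H. Qed.

Lemma poly2_const (R : realFieldType) n m (c : R) : is_poly2 (fun _ : 'M[R]_(n, m) => c).
Proof. by exists c, 0, 0 => X; rewrite /poly2 !mulmx0 mul0mx !mxE addr0 addr0. Qed.

Lemma poly2_add (R : realFieldType) n m (F G : 'M[R]_(n, m) -> R) :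
  is_poly2 F -> is_poly2 G -> is_poly2 (fun X => F X + G X).
Proof.
move=> [c1 [a1 [Q1 H1]]] [c2 [a2 [Q2 H2]]].
exists (c1 + c2), (a1 + a2), (Q1 + Q2) => X; rewrite H1 H2 /poly2.
rewrite !mulmxDr !mulmxDl !mxE; ring.
Qed.

Lemma poly2_scale (R : realFieldType) n m k (F : 'M[R]_(n, m) -> R) :
  is_poly2 F -> is_poly2 (fun X => k * F X).
Proof.
move=> [c [a [Q H]]]; exists (k * c), (k *: a), (k *: Q) => X; rewrite H /poly2.
rewrite -!scalemxAr -scalemxAl !mxE; ring.
Qed.

Lemma poly2_sum (R : realFieldType) n m (I : Type) (r : seq I) (F : I -> 'M[R]_(n, m) -> R) :
  (forall i, is_poly2 (F i)) -> is_poly2 (fun X => \sum_(i <- r) F i X).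
Proof.
move=> H; elim: r => [|i r IH].
  by apply: (poly2_ext _ (poly2_const _ _ 0)) => X; rewrite big_nil.
apply: (poly2_ext _ (poly2_add (H i) IH)) => X; by rewrite big_cons.
Qed.

Lemma poly2_mono (R : realFieldType) n m a j b l :
  is_poly2 (fun X : 'M[R]_(n, m) => X a j * X b l).
Proof.
exists 0, 0, (delta_mx (mxvec_index a j) (mxvec_index b l)) => X.
by rewrite /poly2 mulmx0 mxE !add0r mul_delta_quad !mxvecE.
Qed.

Lemma Qk_poly2 (R : realFieldType) n m kk a b :
  is_poly2 (fun X : 'M[R]_(n, m) => Qk kk X a b).
Proof.
apply: (poly2_ext (F := fun X => \sum_(j < m) (j < kk)%N%:R * (X a j * X b j))).
  by move=> X; rewrite Qk_entry.
apply: poly2_sum => j; apply: poly2_scale; exact: poly2_mono.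
Qed.

Lemma flag_sp_mulr (R : realFieldType) n m kk (X : 'M[R]_(n, m)) (g : 'M[R]_n) :
  flag_sp kk (g *m X) = flag_sp kk X *m g^T.
Proof.
apply/matrixP => j r; rewrite !mxE.
case hj: (j < kk)%N.
  by apply: eq_bigr => l _; rewrite !mxE hj mulrC.
by rewrite big1 // => l _; rewrite !mxE hj mul0r.
Qed.

Lemma Qk_mulr (R : realFieldType) n m kk (X : 'M[R]_(n, m)) (g : 'M[R]_n) :
  Qk kk (g *m X) = g *m Qk kk X *m g^T.
Proof. by rewrite /Qk flag_sp_mulr trmx_mul trmxK !mulmxA. Qed.

Lemma Qk_orth_poly2 (R : realFieldType) n m kk (g : 'M[R]_n) a b :
  is_poly2 (fun X : 'M[R]_(n, m) => Qk kk (g *m X) a b).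
Proof.
apply: (poly2_ext (F := fun X => \sum_d \sum_c (g a c * g b d) * Qk kk X c d)).
  move=> X; rewrite Qk_mulr mxE; apply: eq_bigr => d _; rewrite !mxE mulr_suml.
  by apply: eq_bigr => c _; rewrite !mxE; ring.
apply: poly2_sum => d; apply: poly2_sum => c; apply: poly2_scale; exact: Qk_poly2.
Qed.

Lemma flag_sp_block (R : realFieldType) n m lc kk (X : 'M[R]_(n, m)) (h : 'M[R]_m) :
  in_block_group lc h -> kk \in lc -> flag_sp kk (X *m h) = h^T *m flag_sp kk X.
Proof.
move=> [_ hb] kin; apply/matrixP => j r; rewrite !mxE.
have key : forall l : 'I_m, h l j != 0 -> (l < kk)%N = (j < kk)%N.
  by move=> l nz; have := allP (hb l j nz) kk kin; move/eqP.
case hj: (j < kk)%N.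
  apply: eq_bigr => l _; rewrite !mxE.
  case: (eqVneq (h l j) 0) => [->|nz]; first by rewrite !mulr0 mul0r.
  by rewrite (key l nz) hj mulrC.
rewrite big1 // => l _; rewrite !mxE.
case: (eqVneq (h l j) 0) => [->|nz]; first by rewrite mul0r.
by rewrite (key l nz) hj mulr0.
Qed.

Lemma Qk_block (R : realFieldType) n m lc kk (X : 'M[R]_(n, m)) (h : 'M[R]_m) :
  in_block_group lc h -> kk \in lc -> Qk kk (X *m h) = Qk kk X.
Proof.
move=> hB kin; rewrite /Qk (flag_sp_block X hB kin) trmx_mul trmxK.
have hh : h *m h^T = 1%:M by apply: mulmx1C; case: hB.
by rewrite -mulmxA (mulmxA h) hh mul1mx.
Qed.

Lemma Qk_flagpoly (R : realFieldType) n m lc kk a b :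
  kk \in lc -> flag_poly2 lc (fun X : 'M[R]_(n, m) => Qk kk X a b).
Proof.
move=> kin; split; first exact: Qk_poly2.
by move=> h X hB; rewrite (Qk_block X hB kin).
Qed.

Lemma Qk_orth_flagpoly (R : realFieldType) n m lc kk (g : 'M[R]_n) a b :
  kk \in lc -> flag_poly2 lc (fun X : 'M[R]_(n, m) => Qk kk (g *m X) a b).
Proof.
move=> kin; split; first exact: Qk_orth_poly2.
by move=> h X hB; rewrite mulmxA (Qk_block _ hB kin).
Qed.

Lemma Qk_trace (R : realFieldType) n m kk (X : 'M[R]_(n, m)) :
  orthonormal_cols X -> (kk <= m)%N -> \tr (Qk kk X) = kk%:R.
Proof.
move=> oX km; rewrite /Qk mxtrace_mulC flag_sp_FFt //.
rewrite /mxtrace (eq_bigr (fun j : 'I_m => (j < kk)%N%:R)); last first.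
  by move=> j _; rewrite mxE eqxx.
rewrite -natr_sum; congr (_%:R).
rewrite (eq_bigr (fun j : 'I_m => nat_of_bool (j < kk)%N)) //.
rewrite -(big_mkord xpredT (fun j => nat_of_bool (j < kk)%N)).
rewrite (@big_cat_nat _ _ _ kk 0 m _ _ (leq0n kk) km) /=.
rewrite (@eq_big_nat _ _ _ 0 kk _ (fun _ => 1%N)); last by move=> i /andP[_ ->].
rewrite (@eq_big_nat _ _ _ kk m _ (fun _ => 0%N)); last first.
  by move=> i /andP[ki _]; rewrite ltnNge ki.
by rewrite !sum_nat_const_nat muln1 muln0 subn0 addn0.
Qed.
Lemma design_sum (R : realFieldType) n m lc (D : seq 'M[R]_(n, m)) kk :
  (0 < n)%N -> vexillar_2design lc D -> kk \in lc -> (kk <= m)%N ->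
  (forall X, X \in D -> orthonormal_cols X) ->
  \sum_(X <- D) Qk kk X = ((kk * size D)%:R / n%:R) *: 1%:M.
Proof.
move=> npos [I [[lin one eqon pos inv] avg]] kin km oD.
have Dnz : (size D)%:R != 0 :> R.
  have c1 : flag_poly2 lc (fun _ : 'M[R]_(n, m) => 1) by split; [exact: poly2_const|].
  rewrite pnatr_eq0; apply/negP => /eqP/size0nil eD.
  by move: (avg _ c1); rewrite one eD big_nil mul0r => /eqP; rewrite oner_eq0.
set N := \sum_(X <- D) Qk kk X.
have inv' : forall g : 'M[R]_n, g^T *m g = 1%:M -> g *m N *m g^T = N.
  move=> g og; apply/matrixP => a b.
  have := inv _ g (@Qk_flagpoly R n m lc kk a b kin) og.
  rewrite (avg _ (@Qk_flagpoly R n m lc kk a b kin)) (avg _ (@Qk_orth_flagpoly R n m lc kk g a b kin)).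
  move/(congr1 (fun x => x * (size D)%:R)); rewrite !divfK // => e.
  rewrite /N mulmx_sumr mulmx_suml !summxE -e.
  by apply: eq_bigr => X _; rewrite Qk_mulr.
have eN := orth_scalar npos inv'.
have trN : \tr N = (kk * size D)%:R.
  rewrite /N raddf_sum /= big_seq (eq_bigr (fun _ => kk%:R)); last first.
    by move=> X XD; rewrite Qk_trace // oD.
  by rewrite -big_seq big_const_seq count_predT iter_addr addr0 natrM mulr_natr.
by apply: (eq_trans eN); rewrite trN.
Qed.
Local Notation imx N := (map_mx intr N).

Lemma Zspan_mx (R : realFieldType) k n (M : 'M[R]_(k, n)) v :
  in_Zspan M v <-> exists c : 'rV[int]_k, v = imx c *m M.
Proof.
split => [[c ->]|[c ->]].
  exists (\row_j c j); rewrite mulmx_sum_row; apply: eq_bigr => j _; by rewrite !mxE.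
exists (fun j => c 0 j); rewrite mulmx_sum_row; apply: eq_bigr => j _; by rewrite !mxE.
Qed.

Lemma zsubP (R : realFieldType) n k k' (M : 'M[R]_(k, n)) (M' : 'M[R]_(k', n)) :
  zsub M M' <-> exists T : 'M[int]_(k, k'), M = imx T *m M'.
Proof.
split => [H|[T eM] j].
  have : forall j : 'I_k, exists c : 'rV[int]_k', row j M = imx c *m M'.
    by move=> j; apply/Zspan_mx; exact: H.
  case/fin_all_exists => f Hf; exists (\matrix_(j, l) f j 0 l).
  apply/row_matrixP => j; rewrite row_mul Hf; congr (_ *m _).
  by apply/rowP => l; rewrite !mxE.
apply/Zspan_mx; exists (row j T); rewrite eM row_mul; congr (_ *m _).
by apply/rowP => l; rewrite !mxE.
Qed.

Lemma zsub_trans (R : realFieldType) n k1 k2 k3 (M1 : 'M[R]_(k1, n))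
  (M2 : 'M[R]_(k2, n)) (M3 : 'M[R]_(k3, n)) :
  zsub M1 M2 -> zsub M2 M3 -> zsub M1 M3.
Proof.
move=> /zsubP[T1 e1] /zsubP[T2 e2]; apply/zsubP; exists (T1 *m T2).
by rewrite e1 e2 mulmxA map_mxM.
Qed.

Lemma zsub_refl (R : realFieldType) n k (M : 'M[R]_(k, n)) : zsub M M.
Proof. by apply/zsubP; exists 1%:M; rewrite map_mx1 mul1mx. Qed.

Lemma sub_det (R : realFieldType) n k (A A3 : 'M[R]_(k, n)) :
  row_free A -> row_free A3 -> zsub A A3 ->
  latdet A3 <= latdet A /\ (latdet A3 = latdet A -> zsub A3 A).
Proof.
move=> fA fA3 /zsubP[T eA].
have uT : (imx T : 'M[R]_k) \in unitmx.
  rewrite -row_free_unit -row_leq_rank.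
  by move: fA; rewrite -row_leq_rank eA => /leq_trans; apply; exact: mxrankM_maxl.
set z := \det T.
have ez : \det (imx T) = z%:~R :> R by rewrite det_map_mx.
have znz : z != 0.
  by apply/eqP => z0; move: uT; rewrite unitmxE ez z0 unitr0.
have eld : latdet A = (z * z)%:~R * latdet A3.
  rewrite /latdet eA trmx_mul !mulmxA -(mulmxA _ A3) det_mulmx det_mulmx det_tr ez.
  rewrite intrM; ring.
have pos3 : 0 < latdet A3 by apply: gram_pos.
have z1 : 1 <= z * z by nia.
have z1R : (1 : R) <= (z * z)%:~R by move: z1; rewrite -(ler_int R); exact.
split.
  by have := ler_wpM2r (ltW pos3) z1R; rewrite mul1r eld.
move=> eq; have zz : z * z = 1.
  suff : (z * z)%:~R = ((1 : int)%:~R : R) by move/eqP; rewrite eqr_int => /eqP.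
  apply: (mulIf (x := latdet A3)); first by rewrite gt_eqF.
  by rewrite mul1r -eld eq.
have uTi : T \in unitmx by rewrite unitmxE; apply/unitrP; exists z; split.
apply/zsubP; exists (invmx T); rewrite eA mulmxA -map_mxM mulVmx // map_mx1.
by rewrite mul1mx.
Qed.
Lemma usubmx_mul (T : pzSemiRingType) m1 m2 n p (A : 'M[T]_(m1 + m2, n)) (B : 'M[T]_(n, p)) :
  usubmx (A *m B) = usubmx A *m B.
Proof. by rewrite -{1}[A]vsubmxK mul_col_mx col_mxKu. Qed.

Lemma lat_join (R : realFieldType) n k (B : 'M[R]_n) (A1 A2 : 'M[R]_(k, n)) :
  B \in unitmx -> sublattice B A1 -> sublattice B A2 -> (A2 <= A1)%MS ->
  exists A3 : 'M[R]_(k, n), [/\ sublattice B A3, zsub A1 A3, zsub A2 A3 &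
     forall p (Y : 'M[R]_(p, n)), zsub A1 Y -> zsub A2 Y -> zsub A3 Y].
Proof.
move=> uB [fA1 L1] [fA2 L2] sub21.
have [N1 e1] : exists N1 : 'M[int]_(k, n), A1 = imx N1 *m B by apply/zsubP; exact: L1.
have [N2 e2] : exists N2 : 'M[int]_(k, n), A2 = imx N2 *m B by apply/zsubP; exact: L2.
have fB : row_free B by rewrite row_free_unit.
have [P uP [Q uQ [d sd eM]]] := int_Smith_normal_form (col_mx N1 N2).
set r := find (fun x => x == 0) d.
have dz : forall i, (r <= i)%N -> d`_i = 0.
  move=> i ri; case: (ltnP i (size d)) => [isz|]; last by move=> ?; rewrite nth_default.
  have rs : (r < size d)%N by apply: leq_ltn_trans ri isz.
  have d0 : d`_r = 0.
    by apply/eqP; have := @nth_find _ 0 (fun x : int => x == 0) d; rewrite has_find; apply.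
  have : (d`_r %| d`_i)%Z.
    have trd : transitive dvdz by move=> y x z; apply: dvdz_trans.
    have rfd : reflexive dvdz by move=> x; apply: dvdzz.
    exact: (sorted_leq_nth trd rfd 0 sd) r i rs isz ri.
  by rewrite d0 dvd0z => /eqP.
have dnz : forall i, (i < r)%N -> d`_i != 0.
  by move=> i ir; have := before_find 0 ir; rewrite /= => ->.
pose d' : 'rV[int]_n := \row_j (if (j < r)%N then d`_j else 1).
have eDg : \matrix_(i, j) (d`_i *+ (i == j :> nat)) =
    (pid_mx r : 'M[int]_(k + k, n)) *m diag_mx d'.
  apply/matrixP => i j; rewrite mul_mx_diag !mxE.
  case: (eqVneq (i : nat) j) => [eij|nij] /=; last by rewrite mulr0n mul0r.
  rewrite -eij; case: (ltnP i r) => ir /=; first by rewrite mul1r mulr1n.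
  by rewrite mul0r mulr1n dz.
pose W := diag_mx d' *m Q.
have detW : \det W != 0.
  rewrite det_mulmx det_diag mulf_neq0 //.
    apply/prodf_neq0 => j _; rewrite mxE; case: ifP => [/dnz|] //.
  by apply/eqP => dQ; move: uQ; rewrite unitmxE dQ unitr0.
have uW : (imx W : 'M[R]_n) \in unitmx by rewrite unitmxE det_map_mx unitfE intr_eq0.
have uPR : (imx P : 'M[R]_(k + k)) \in unitmx.
  by rewrite unitmxE det_map_mx; apply: rmorph_unit; rewrite -unitmxE.
have eMR : (imx (col_mx N1 N2) : 'M[R]_(k + k, n)) = imx P *m pid_mx r *m imx W.
  by rewrite eM eDg /W !map_mxM map_pid_mx !mulmxA.
have rk : \rank (imx (col_mx N1 N2) : 'M[R]_(k + k, n)) = k.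
  rewrite -(mxrankMfree _ fB) map_col_mx mul_col_mx -e1 -e2 -addsmxE (addsmx_idPl sub21).
  exact/eqP.
have rk2 : \rank (pid_mx r : 'M[R]_(k + k, n)) = k.
  rewrite -[RHS]rk eMR mxrankMfree ?row_free_unit //.
  have fPt : row_free ((imx P : 'M[R]_(k + k))^T) by rewrite row_free_unit unitmx_tr.
  by rewrite -[in RHS]mxrank_tr trmx_mul (mxrankMfree _ fPt) mxrank_tr.
have mk : minn (k + k) (minn n r) = k.
  have epm : (pid_mx r : 'M[R]_(k + k, n)) = pid_mx (minn (k + k) (minn n r)).
    apply/matrixP => i j; rewrite !mxE; have := ltn_ord i; have := ltn_ord j.
    by move=> *; congr (_%:R); congr (nat_of_bool _); case: eqP => //= eij; apply/idP/idP; lia.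
  move: rk2; rewrite epm rank_pid_mx //; first exact: geq_minl.
  by apply: leq_trans (geq_minr _ _) (geq_minl _ _).
have epid : (pid_mx r : 'M[int]_(k + k, n)) = col_mx (pid_mx k) 0.
  apply/matrixP => i j; have := ltn_ord j.
  case: (split_ordP i) => i' -> /=; rewrite ?col_mxEu ?col_mxEd !mxE /=; have := ltn_ord i'.
    by move=> *; congr (_%:R); congr (nat_of_bool _); case: eqP => //= eij; apply/idP/idP; lia.
  move=> *; rewrite (_ : (_ && _) = false) //.
  by case: eqP => //= eij; apply/negP; lia.
pose U : 'M[int]_(k, n) := pid_mx k *m W.
have eM2 : col_mx N1 N2 = P *m col_mx U 0.
  by rewrite eM eDg epid -!mulmxA mul_col_mx mul0mx.
have e3 : col_mx N1 N2 = col_mx (usubmx (lsubmx P) *m U) (dsubmx (lsubmx P) *m U).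
  by rewrite -mul_col_mx vsubmxK eM2 -{1}[P]hsubmxK mul_row_col mulmx0 addr0.
case/eq_col_mx: e3 => eN1 eN2.
have eU : U = lsubmx (usubmx (invmx P)) *m N1 + rsubmx (usubmx (invmx P)) *m N2.
  have h : col_mx U 0 = invmx P *m col_mx N1 N2 by rewrite eM2 mulKmx.
  have := congr1 (@usubmx _ k k n) h; rewrite col_mxKu usubmx_mul => ->.
  by rewrite -mul_row_col hsubmxK.
have kn : (k <= n)%N by move: fA1 => /eqP <-; exact: rank_leq_col.
exists (imx U *m B); split.
- split.
    rewrite /row_free mxrankMfree // /U map_mxM map_pid_mx mxrankMfree ?row_free_unit //.
    by rewrite rank_pid_mx.
  move=> j; apply/Zspan_mx; exists (row j U); rewrite row_mul; congr (_ *m _).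
  by apply/rowP => l; rewrite !mxE.
- by apply/zsubP; exists (usubmx (lsubmx P)); rewrite e1 eN1 map_mxM mulmxA.
- by apply/zsubP; exists (dsubmx (lsubmx P)); rewrite e2 eN2 map_mxM mulmxA.
move=> p Y /zsubP[S1 h1] /zsubP[S2 h2]; apply/zsubP.
exists (lsubmx (usubmx (invmx P)) *m S1 + rsubmx (usubmx (invmx P)) *m S2).
rewrite eU !map_mxD !map_mxM !mulmxDl -!mulmxA -e1 -e2 h1 h2.
by rewrite !mulmxA.
Qed.
Lemma sum_ltn h x : (x <= h)%N -> (\sum_(i < h) nat_of_bool (i < x)%N)%N = x.
Proof.
move=> xh; rewrite -(big_mkord xpredT (fun j => nat_of_bool (j < x)%N)).
rewrite (@big_cat_nat _ _ _ x 0 h _ _ (leq0n x) xh) /=.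
rewrite (@eq_big_nat _ _ _ 0 x _ (fun _ => 1%N)); last by move=> i /andP[_ ->].
rewrite (@eq_big_nat _ _ _ x h _ (fun _ => 0%N)); last first.
  by move=> i /andP[ki _]; rewrite ltnNge ki.
by rewrite !sum_nat_const_nat muln1 muln0 subn0 addn0.
Qed.

Lemma sum_count_le h (s : seq nat) : all (fun p => p <= h)%N s ->
  (\sum_(i < h) count (fun p => i < p)%N s)%N = sumn s.
Proof.
elim: s => [|x s IH] /=; first by rewrite big1.
case/andP=> xh hs; rewrite big_split /= sum_ltn // IH //.
Qed.

Lemma sumn_map_iota h (f : nat -> nat) :
  sumn [seq f i | i <- iota 0 h] = (\sum_(i < h) f i)%N.
Proof. by rewrite sumnE big_map -(big_mkord xpredT) /index_iota subn0. Qed.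

Lemma conjp_sum lam : is_partition lam -> sumn (conjp lam) = psize lam.
Proof.
case/andP=> sl _; rewrite /conjp sumn_map_iota /psize.
apply: sum_count_le; case: lam sl => [|x s] //= ps.
rewrite leqnn /=; have := order_path_min _ ps.
apply => //; move=> a b c /= ha hb; exact: leq_trans hb ha.
Qed.

Lemma conjp_le lam k : k \in conjp lam -> (k <= head 0%N (conjp lam))%N.
Proof.
rewrite /conjp; case: (head 0%N lam) => [|h] //= .
rewrite inE => /orP[/eqP ->//|/mapP[i _ ->]].
by apply: sub_count => p /=; apply: leq_ltn_trans.
Qed.

Lemma sum_nth_sumn (s : seq nat) : (\sum_(i < size s) nth 0%N s i)%N = sumn s.
Proof. by rewrite sumnE (big_nth 0%N) big_mkord. Qed.
Lemma prod_eq (R : realFieldType) (I : finType) (a b : I -> R) :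
  (forall i, 0 < a i) -> (forall i, a i <= b i) ->
  \prod_i b i <= \prod_i a i -> forall i, a i = b i.
Proof.
move=> apos ab hle j; apply/eqP; rewrite eq_le ab /=.
apply/negP => /negP; rewrite -ltNge => lt.
have bpos : forall i, 0 < b i by move=> i; exact: lt_le_trans (apos i) (ab i).
have Pab : \prod_(i | i != j) a i <= \prod_(i | i != j) b i.
  by apply: ler_prod => i _; rewrite ltW ?apos // ab.
have Pbpos : 0 < \prod_(i | i != j) b i by apply: prodr_gt0.
have : \prod_i a i < \prod_i b i.
  rewrite (bigD1 j) //= [X in _ < X](bigD1 j) //=.
  apply: le_lt_trans (_ : a j * \prod_(i | i != j) b i < _).
    by rewrite ler_wpM2l // ltW.
  by rewrite ltr_pM2r.
by rewrite ltNge hle.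
Qed.

Lemma min_chain_eq (R : realFieldType) n (B : 'M[R]_n) (lc : seq nat) (C C' : chain R n lc) :
  B \in unitmx -> minimal_chain B C -> minimal_chain B C' ->
  (forall i, (C' i <= C i)%MS) -> chain_eq C C'.
Proof.
move=> uB [[subC nestC] minC] [[subC' nestC'] minC'] sub.
have : forall i : 'I_(size lc), exists A3 : 'M[R]_(nth 0%N lc i, n),
    [/\ sublattice B A3, zsub (C i) A3, zsub (C' i) A3 &
     forall p (Y : 'M[R]_(p, n)), zsub (C i) Y -> zsub (C' i) Y -> zsub A3 Y].
  by move=> i; apply: lat_join.
case/fin_all_exists => C'' HC''.
have chC'' : is_chain B C''.
  split; first by move=> i; case: (HC'' i).
  move=> i j le; case: (HC'' j) => _ _ _ P4; apply: P4.
    by apply: zsub_trans (nestC i j le) _; case: (HC'' i).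
  by apply: zsub_trans (nestC' i j le) _; case: (HC'' i).
have sd : forall (D : chain R n lc), is_chain B D ->
    (forall i, zsub (D i) (C'' i)) ->
    chain_val D <= chain_val C'' -> forall i, zsub (C'' i) (D i).
  move=> D [subD _] hz hv i.
  have fr : forall i, row_free (D i) by move=> l; case: (subD l).
  have fr'' : forall i, row_free (C'' i) by move=> l; case: (HC'' l) => [[]].
  have ap : forall l, 0 < latdet (C'' l) by move=> l; apply: gram_pos.
  have ab : forall l, latdet (C'' l) <= latdet (D l).
    by move=> l; case: (sub_det (fr l) (fr'' l) (hz l)).
  have eq := prod_eq ap ab hv i.
  by case: (sub_det (fr i) (fr'' i) (hz i)) => _ H; exact: H eq.
have h1 := sd C (conj subC nestC) (fun i => let: And4 _ z _ _ := HC'' i in z) (minC _ chC'').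
have h2 := sd C' (conj subC' nestC') (fun i => let: And4 _ _ z _ := HC'' i in z) (minC' _ chC'').
move=> i; case: (HC'' i) => _ z1 z2 _; split.
  exact: zsub_trans z1 (h2 i).
exact: zsub_trans z2 (h1 i).
Qed.
Unset Implicit Arguments.
Set Strict Implicit.

Theorem mainTheorem5 (R : realFieldType) (n : nat) (lam : seq nat)
  (B : 'M[R]_n)
  (S : seq (chain R n (conjp lam)))
  (D : seq 'M[R]_(n, head 0%N (conjp lam))) :
  is_partition lam ->
  all (fun k => k < n)%N (conjp lam) ->
  B \in unitmx ->
  enum_minimal B S ->
  enum_flags S D ->
  vexillar_2design (conjp lam) D ->
  \sum_(C <- S) PiL C = ((psize lam * size S)%:R / n%:R) *: (1%:M : 'M[R]_n).
Proof.
move=> part lcn uB [Smin [_ Suniq]] [Dorth [Duniq [DtoS StoD]]] des.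
case: (posnP n) => [n0|npos].
  by apply/matrixP => -[x hx]; exfalso; move: hx; rewrite n0.
pose C0 : chain R n (conjp lam) := fun i => 0.
have ex : forall s : 'I_(size S), exists t : 'I_(size D),
    flag_of (nth 0 D t) (nth C0 S s).
  move=> s; have [X XD fX] := StoD s (ltn_ord s) C0.
  have hi : (index X D < size D)%N by rewrite index_mem.
  by exists (Ordinal hi); rewrite /= nth_index.
case/fin_all_exists: ex => f Hf.
have fl_eq : forall (X Y : 'M[R]_(n, head 0%N (conjp lam))) (C : chain R n (conjp lam)),
    flag_of X C -> flag_of Y C ->
    forall i : 'I_(size (conjp lam)), (flag_sp (nth 0%N (conjp lam) i) Y <= flag_sp (nth 0%N (conjp lam) i) X)%MS.
  move=> X Y C /forallP hX /forallP hY i.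
  move: (hX i) (hY i) => /andP[_ a] /andP[b _]; exact: submx_trans b a.
have finj : injective f.
  move=> s s' e; apply/val_inj/(Suniq _ _ (ltn_ord s) (ltn_ord s') C0).
  apply: min_chain_eq uB (Smin _ (ltn_ord s) C0) (Smin _ (ltn_ord s') C0) _.
  move=> i; move: (Hf s) (Hf s'); rewrite e => /forallP h1 /forallP h2.
  move: (h1 i) (h2 i) => /andP[a _] /andP[_ b]; exact: submx_trans b a.
have fsurj : forall t, exists s, f s = t.
  move=> t; have tD : nth 0 D t \in D by rewrite mem_nth.
  have [s ss fs] := DtoS _ tD.
  exists (Ordinal ss); apply/val_inj/(Duniq _ _ (ltn_ord _) (ltn_ord t)).
  apply/allP => k kin.
  have hi : (index k (conjp lam) < size (conjp lam))%N by rewrite index_mem.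
  have e1 := fl_eq _ _ _ (Hf (Ordinal ss)) (fs C0) (Ordinal hi).
  have e2 := fl_eq _ _ _ (fs C0) (Hf (Ordinal ss)) (Ordinal hi).
  rewrite /= nth_index // in e1 e2.
  by apply/andP; split.
have Pi : forall s : 'I_(size S), PiL (nth C0 S s) =
    \sum_(i < size (conjp lam)) Qk (nth 0%N (conjp lam) i) (nth 0 D (f s)).
  move=> s; apply: eq_bigr => i _.
  have [[subC _] _] := Smin _ (ltn_ord s) C0.
  have fr : row_free (nth C0 S s i) by case: (subC i).
  have oX : orthonormal_cols (nth 0 D (f s)) by apply: Dorth; rewrite mem_nth.
  have hF := Hf s; move/forallP: hF => /(_ i) hF.
  exact: proj_flag oX fr hF.
have eset : [set f s | s in [set: 'I_(size S)]] = [set: 'I_(size D)].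
  apply/setP => t; rewrite !inE; have [s <-] := fsurj t; exact: imset_f.
have cardSD : size S = size D.
  have := card_imset [set: 'I_(size S)] finj; rewrite eset !cardsT !card_ord.
  by move=> ->.
rewrite (big_nth C0) big_mkord (eq_bigr _ (fun s _ => Pi s)).
set G := fun X : 'M[R]_(n, head 0%N (conjp lam)) =>
  \sum_(i < size (conjp lam)) Qk (nth 0%N (conjp lam) i) X.
have -> : \sum_(s < size S) G (nth 0 D (f s)) = \sum_(t < size D) G (nth 0 D t).
  transitivity (\sum_(s in [set: 'I_(size S)]) G (nth 0 D (f s))).
    by apply: eq_bigl => s; rewrite inE.
  rewrite -(@big_imset _ _ _ _ _ f [set: _] (fun t => G (nth 0 D t))) /=; last by move=> x y _ _; apply: finj.
  by rewrite eset; apply: eq_bigl => t; rewrite inE.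
rewrite -(big_mkord xpredT (fun t => G (nth 0 D t))) -(big_nth 0 xpredT G) /G.
rewrite exchange_big /=.
rewrite (eq_bigr (fun i : 'I_(size (conjp lam)) =>
   (((nth 0%N (conjp lam) i) * size D)%:R / n%:R) *: (1%:M : 'M[R]_n))); last first.
  move=> i _; apply: (design_sum npos des).
  - by rewrite mem_nth.
  - by apply: conjp_le; rewrite mem_nth.
  - exact: Dorth.
rewrite -scaler_suml -mulr_suml -natr_sum -big_distrl /= sum_nth_sumn conjp_sum //.
by rewrite cardSD.
Qed.
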